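(* In the setting of the blurring mean-shift iteration with $f$ PDD and fixed positive weights, let $C_1=\bigcap_{t\ge0}C_1^{(t)}$ where $C_1^{(t)}$ is the convex hull of $\{x_1^{(t)},\dots,x_N^{(t)}\}$. Suppose $i$ is an index such that $x_i^{(t)}\to v$ as $t\to\infty$ for some vertex $v$ of $C_1$. Then for every index $j$ such that $\lim_{t\to\infty}x_j^{(t)}\neq v$, we have $\lim_{t\to\infty}f(x_i^{(t)}-x_j^{(t)})=0$.
   Context: Setting: $x_1,\dots,x_N\in\mathbb{R}^p$, fixed weights $w_1,\dots,w_N>0$, and $f:\mathbb{R}^p\to[0,1]$ PDD, meaning: $f(u)=1$ iff $u=0$; $f(u)=\varphi(\|u\|)$ for some $\varphi:[0,\infty)\to[0,1]$; $\varphi$ is decreasing (non-increasing). The blurring mean-shift iteration is $x_i^{(0)}=x_i$ and $x_i^{(t+1)}=\frac{\sum_{j=1}^N f(x_i^{(t)}-x_j^{(t)})w_jx_j^{(t)}}{\sum_{j=1}^N f(x_i^{(t)}-x_j^{(t)})w_j}$. *)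

(* Defs.v *)
From Stdlib Require Import Reals Lra Lia.
Open Scope R_scope.

(* Points of R^p are represented as functions nat -> R, of which only the
   coordinates k < p are meaningful.  Two points are equal in R^p iff they
   agree on all coordinates k < p. *)
Definition vec := nat -> R.

Definition veq (p : nat) (u v : vec) : Prop :=
  forall k, (k < p)%nat -> u k = v k.

Definition vzero : vec := fun _ => 0.
Definition vadd (u v : vec) : vec := fun k => u k + v k.
Definition vsub (u v : vec) : vec := fun k => u k - v k.
Definition vscale (a : R) (u : vec) : vec := fun k => a * u k.

Fixpoint rsum (n : nat) (g : nat -> R) : R :=
  match n with
  | O => 0
  | S m => rsum m g + g m
  end.

Fixpoint vsum (n : nat) (g : nat -> vec) : vec :=
  match n with
  | O => vzero
  | S m => vadd (vsum m g) (g m)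
  end.

Definition vnorm (p : nat) (u : vec) : R := sqrt (rsum p (fun k => u k * u k)).

Definition PDD (p : nat) (f : vec -> R) : Prop :=
  (forall u, 0 <= f u <= 1) /\
  (forall u, f u = 1 <-> veq p u vzero) /\
  exists phi : R -> R,
    (forall u, f u = phi (vnorm p u)) /\
    (forall a b, 0 <= a -> a <= b -> phi b <= phi a).

(* Blurring mean-shift: bms p N f w x t i = x_i^{(t)} *)
Fixpoint bms (N : nat) (f : vec -> R) (w : nat -> R) (x : nat -> vec)
    (t : nat) : nat -> vec :=
  match t with
  | O => x
  | S t' =>
      let y := bms N f w x t' in
      fun i =>
        vscale (/ rsum N (fun j => f (vsub (y i) (y j)) * w j))
               (vsum N (fun j => vscale (f (vsub (y i) (y j)) * w j) (y j)))
  end.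

Definition in_conv_hull (p N : nat) (z : nat -> vec) (y : vec) : Prop :=
  exists lam : nat -> R,
    (forall j, (j < N)%nat -> 0 <= lam j) /\
    rsum N lam = 1 /\
    veq p y (vsum N (fun j => vscale (lam j) (z j))).

Definition bms_C1 (p N : nat) (f : vec -> R) (w : nat -> R) (x : nat -> vec)
    (y : vec) : Prop :=
  forall t, in_conv_hull p N (bms N f w x t) y.

Definition is_vertex (p : nat) (S : vec -> Prop) (v : vec) : Prop :=
  S v /\
  forall a b s, S a -> S b -> 0 < s < 1 ->
    veq p v (vadd (vscale s a) (vscale (1 - s) b)) ->
    veq p a v /\ veq p b v.

Definition vconv (p : nat) (u : nat -> vec) (v : vec) : Prop :=
  forall k, (k < p)%nat -> Un_cv (fun t => u t k) (v k).

(* Main.v *)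
Require Import Defs.
From Stdlib Require Import Reals Lra Lia Rtopology ClassicalEpsilon Classical.
Open Scope R_scope.

Lemma vsum_coord n g m : vsum n g m = rsum n (fun j => g j m).
Proof. induction n as [|n IH]; simpl; [unfold vzero; reflexivity | unfold vadd; rewrite IH; reflexivity]. Qed.

Lemma rsum_ext n g h : (forall j, (j < n)%nat -> g j = h j) -> rsum n g = rsum n h.
Proof. induction n as [|n IH]; intros H; simpl; [reflexivity|].
  rewrite IH by (intros; apply H; lia). rewrite H by lia. reflexivity. Qed.

Lemma rsum_plus n g h : rsum n (fun j => g j + h j) = rsum n g + rsum n h.
Proof. induction n as [|n IH]; simpl; [lra|rewrite IH; ring]. Qed.

Lemma rsum_scal n a g : rsum n (fun j => a * g j) = a * rsum n g.
Proof. induction n as [|n IH]; simpl; [ring|rewrite IH; ring]. Qed.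

Lemma rsum_swap n m g : rsum n (fun a => rsum m (fun b => g a b)) = rsum m (fun b => rsum n (fun a => g a b)).
Proof. induction n as [|n IH]; simpl.
  - induction m as [|m IHm]; simpl; [reflexivity| rewrite <- IHm; ring].
  - rewrite IH. rewrite <- rsum_plus. reflexivity. Qed.

Lemma rsum_nonneg n g : (forall j, (j < n)%nat -> 0 <= g j) -> 0 <= rsum n g.
Proof. induction n as [|n IH]; intros H; simpl; [lra|].
  assert (0 <= rsum n g) by (apply IH; intros; apply H; lia). specialize (H n ltac:(lia)). lra. Qed.

Lemma rsum_le n g h : (forall j, (j < n)%nat -> g j <= h j) -> rsum n g <= rsum n h.
Proof. induction n as [|n IH]; intros H; simpl; [lra|].
  assert (rsum n g <= rsum n h) by (apply IH; intros; apply H; lia). specialize (H n ltac:(lia)). lra. Qed.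

Lemma rsum_ge_term n g j : (forall k, (k < n)%nat -> 0 <= g k) -> (j < n)%nat -> g j <= rsum n g.
Proof. induction n as [|n IH]; intros H Hj; simpl; [lia|].
  destruct (Nat.eq_dec j n) as [->|Hne].
  - assert (0 <= rsum n g) by (apply rsum_nonneg; intros; apply H; lia). lra.
  - assert (g j <= rsum n g) by (apply IH; [intros; apply H; lia | lia]).
    specialize (H n ltac:(lia)). lra. Qed.

Lemma rsum_upd n g j d : (j < n)%nat ->
  rsum n (fun k => if Nat.eqb k j then g k + d else g k) = rsum n g + d.
Proof. induction n as [|n IH]; intros Hj; simpl; [lia|].
  destruct (Nat.eq_dec j n) as [->|Hne].
  - rewrite Nat.eqb_refl. rewrite (rsum_ext n _ g). ring.
    intros k Hk. destruct (Nat.eqb_spec k n); [lia|reflexivity].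
  - rewrite IH by lia. destruct (Nat.eqb_spec n j); [lia|]. ring. Qed.

Definition inD p N (z : nat -> vec) (y : vec) (s : R) : Prop :=
  exists lam : nat -> R, (forall j, (j < N)%nat -> 0 <= lam j) /\ rsum N lam = s /\
    veq p y (vsum N (fun j => vscale (lam j) (z j))).

Lemma inD_nonneg p N z y s : inD p N z y s -> 0 <= s.
Proof. intros [lam [H1 [H2 _]]]. rewrite <- H2. apply rsum_nonneg; auto. Qed.

Lemma inD_remove p N z y s lam j c : (forall k, (k < N)%nat -> 0 <= lam k) -> rsum N lam = s ->
  veq p y (vsum N (fun k => vscale (lam k) (z k))) -> (j < N)%nat -> c <= lam j ->
  inD p N z (vsub y (vscale c (z j))) (s - c).
Proof. intros H1 H2 H3 Hj Hc.
  exists (fun k => if Nat.eqb k j then lam k + - c else lam k). split; [|split].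
  - intros k Hk. destruct (Nat.eqb_spec k j); [subst; lra| auto].
  - rewrite rsum_upd by lia. lra.
  - intros m Hm. unfold vsub, vscale. rewrite H3 by lia. rewrite !vsum_coord. unfold vscale.
    rewrite (rsum_ext N (fun k => (if Nat.eqb k j then lam k + - c else lam k) * z k m) (fun k => if Nat.eqb k j then lam k * z k m + (-c * z j m) else lam k * z k m)).
    + rewrite rsum_upd by lia. ring.
    + intros k Hk. destruct (Nat.eqb_spec k j); [subst; ring|reflexivity]. Qed.

Lemma inD_scale p N z y s a s' : 0 <= a -> s' = a * s -> inD p N z y s -> inD p N z (vscale a y) s'.
Proof. intros Ha -> [lam [H1 [H2 H3]]]. exists (fun k => a * lam k). split; [|split].
  - intros k Hk. specialize (H1 k Hk). nra.
  - rewrite rsum_scal, H2. reflexivity.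
  - intros m Hm. unfold vscale at 1. rewrite H3 by lia. rewrite !vsum_coord. unfold vscale.
    rewrite <- rsum_scal. apply rsum_ext. intros; ring. Qed.

Lemma inD_split p N z y s : inD p (S N) z y s <-> exists mu, 0 <= mu /\ inD p N z (vsub y (vscale mu (z N))) (s - mu).
Proof. split.
  - intros [lam [H1 [H2 H3]]]. exists (lam N). split; [apply H1; lia|].
    exists lam. split; [intros; apply H1; lia|]. split.
    + simpl in H2. lra.
    + intros m Hm. unfold vsub. rewrite H3 by lia. simpl. unfold vadd. unfold vscale at 2 3. ring.
  - intros [mu [Hmu [lam [H1 [H2 H3]]]]].
    exists (fun k => if Nat.eqb k N then mu else lam k). split; [|split].
    + intros k Hk. destruct (Nat.eqb_spec k N); [lra| apply H1; lia].
    + simpl. rewrite Nat.eqb_refl. rewrite (rsum_ext N _ lam). lra.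
      intros k Hk. destruct (Nat.eqb_spec k N); [lia|reflexivity].
    + intros m Hm. specialize (H3 m Hm). unfold vsub, vscale in H3. simpl. unfold vadd.
      rewrite Nat.eqb_refl. rewrite !vsum_coord in *.
      rewrite (rsum_ext N (fun j => vscale _ _ m) (fun j => vscale (lam j) (z j) m)).
      * unfold vscale. lra.
      * intros k Hk. destruct (Nat.eqb_spec k N); [lia|reflexivity]. Qed.

Definition close p (y b : vec) e := forall k, (k < p)%nat -> Rabs (y k - b k) < e.

Lemma small0 a : (forall e, 0 < e -> Rabs a < e) -> a = 0.
Proof. intros H. destruct (Req_dec a 0) as [|Hn]; auto.
  specialize (H (Rabs a) (Rabs_pos_lt a Hn)). lra. Qed.

Lemma eps_n n : 0 < / (INR n + 1).
Proof. apply Rinv_0_lt_compat. pose proof (pos_INR n). lra. Qed.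

Lemma eps_small e : 0 < e -> exists N0, forall n, (N0 <= n)%nat -> / (INR n + 1) < e.
Proof. intros He. destruct (archimed_cor1 e He) as [N0 [H1 H2]]. exists N0. intros n Hn.
  apply Rle_lt_trans with (/ INR N0); auto. apply Rinv_le_contravar.
  apply lt_0_INR; lia. apply le_INR in Hn. lra. Qed.

Lemma D_closed p z : forall N b sg,
  (forall e, 0 < e -> exists y s, inD p N z y s /\ Rabs (s - sg) < e /\ close p y b e) ->
  inD p N z b sg.
Proof.
  induction N as [|N IH]; intros b sg H.
  - exists (fun _ => 0). split; [intros; lia|]. split.
    + simpl. symmetry. apply small0. intros e He. destruct (H e He) as [y [s [[lam [_ [Hs _]]] [Hs2 _]]]].
      simpl in Hs. subst s. replace (0 - sg) with (- sg) in Hs2 by ring. rewrite Rabs_Ropp in Hs2. exact Hs2.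
    + intros k Hk. simpl. unfold vzero. apply small0. intros e He.
      destruct (H e He) as [y [s [[lam [_ [_ Hy]]] [_ Hc]]]].
      specialize (Hc k Hk). rewrite Hy in Hc by auto. simpl in Hc. unfold vzero in Hc.
      rewrite Rabs_minus_sym in Hc. replace (b k - 0) with (b k) in Hc by ring. exact Hc.
  - assert (Hex : forall n, exists q : vec * (R * R),
       inD p N z (vsub (fst q) (vscale (snd (snd q)) (z N))) (fst (snd q) - snd (snd q)) /\
       0 <= snd (snd q) /\ Rabs (fst (snd q) - sg) < / (INR n + 1) /\ close p (fst q) b (/ (INR n + 1))).
    { intros n. destruct (H _ (eps_n n)) as [y [s [Hd [Hs Hc]]]].
      apply inD_split in Hd. destruct Hd as [mu [Hmu Hd]].
      exists (y, (s, mu)). simpl. auto. }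
    set (g := fun n => proj1_sig (constructive_indefinite_description _ (Hex n))).
    assert (Hg : forall n, let q := g n in
       inD p N z (vsub (fst q) (vscale (snd (snd q)) (z N))) (fst (snd q) - snd (snd q)) /\
       0 <= snd (snd q) /\ Rabs (fst (snd q) - sg) < / (INR n + 1) /\ close p (fst q) b (/ (INR n + 1))).
    { intros n. exact (proj2_sig (constructive_indefinite_description _ (Hex n))). }
    clearbody g.
    set (mu := fun n => snd (snd (g n))).
    assert (Hb : forall n, 0 <= mu n <= Rabs sg + 1).
    { intros n. destruct (Hg n) as [Hd [H0 [Hs _]]]. apply inD_nonneg in Hd. unfold mu.
      assert (/ (INR n + 1) <= 1).
      { rewrite <- Rinv_1. apply Rinv_le_contravar; [lra|]. pose proof (pos_INR n); lra. }
      split; auto. apply Rabs_def2 in Hs. pose proof (Rle_abs sg). lra. }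
    destruct (Bolzano_Weierstrass mu _ (compact_P3 0 (Rabs sg + 1)) Hb) as [l Hl].
    assert (Hl0 : 0 <= l).
    { destruct (Rle_dec 0 l) as [|Hn]; auto. exfalso.
      assert (Hp : 0 < - l) by lra.
      destruct (Hl (disc l (mkposreal _ Hp)) 0%nat) as [n [_ Hn2]].
      { exists (mkposreal _ Hp). intros u Hu; exact Hu. }
      unfold disc in Hn2; simpl in Hn2. apply Rabs_def2 in Hn2. specialize (Hb n). lra. }
    apply inD_split. exists l. split; auto.
    apply IH. intros e He.
    set (M := 1 + rsum p (fun k => Rabs (z N k))).
    assert (HM : forall k, (k < p)%nat -> Rabs (z N k) <= M).
    { intros k Hk. unfold M. pose proof (rsum_ge_term p (fun k => Rabs (z N k)) k (fun k _ => Rabs_pos _) Hk). simpl in H0. lra. }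
    assert (HM1 : 1 <= M).
    { unfold M. pose proof (rsum_nonneg p (fun k => Rabs (z N k)) (fun k _ => Rabs_pos _)). lra. }
    destruct (eps_small (e / 2) ltac:(lra)) as [N0 HN0].
    assert (Hd : 0 < e / (2 * M)) by (apply Rdiv_lt_0_compat; lra).
    destruct (Hl (disc l (mkposreal _ Hd)) N0) as [n [Hn Hn2]].
    { exists (mkposreal _ Hd). intros u Hu; exact Hu. }
    unfold disc in Hn2; simpl in Hn2.
    specialize (HN0 n Hn).
    destruct (Hg n) as [Hdn [_ [Hs Hc]]].
    fold (mu n) in Hdn.
    exists (vsub (fst (g n)) (vscale (mu n) (z N))), (fst (snd (g n)) - mu n).
    assert (Hk : e / (2 * M) * M = e / 2) by (field; lra).
    split; [exact Hdn|]. split.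
    + replace (fst (snd (g n)) - mu n - (sg - l)) with ((fst (snd (g n)) - sg) - (mu n - l)) by ring.
      eapply Rle_lt_trans; [apply Rabs_triang|]. rewrite Rabs_Ropp.
      assert (e / (2 * M) <= e / 2).
      { rewrite <- Hk. pose proof (Rlt_le _ _ Hd). nra. }
      lra.
    + intros k Hkp. unfold vsub, vscale.
      replace (fst (g n) k - mu n * z N k - (b k - l * z N k)) with ((fst (g n) k - b k) - (mu n - l) * z N k) by ring.
      eapply Rle_lt_trans; [apply Rabs_triang|]. rewrite Rabs_Ropp, Rabs_mult.
      specialize (Hc k Hkp). specialize (HM k Hkp).
      assert (Rabs (mu n - l) * Rabs (z N k) <= e / 2).
      { rewrite <- Hk. apply Rmult_le_compat; try apply Rabs_pos; lra. }
      lra.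
Qed.

Lemma rsum_scalr n a g : rsum n (fun j => g j * a) = rsum n g * a.
Proof. induction n as [|n IH]; simpl; [ring|rewrite IH; ring]. Qed.

Lemma inD_trans p N M z z' y s : (forall k, (k < M)%nat -> inD p N z (z' k) 1) ->
  inD p M z' y s -> inD p N z y s.
Proof.
  intros Hz [mu [H1 [H2 H3]]].
  assert (Hex : forall k, exists lam : nat -> R, (k < M)%nat -> (forall j, (j < N)%nat -> 0 <= lam j) /\ rsum N lam = 1 /\
    veq p (z' k) (vsum N (fun j => vscale (lam j) (z j)))).
  { intros k. destruct (Compare_dec.lt_dec k M) as [Hk|Hk].
    - destruct (Hz k Hk) as [lam Hl]. exists lam. auto.
    - exists (fun _ => 0). intros; lia. }
  set (L := fun k => proj1_sig (constructive_indefinite_description _ (Hex k))).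
  assert (HL : forall k, (k < M)%nat -> (forall j, (j < N)%nat -> 0 <= L k j) /\ rsum N (L k) = 1 /\
    veq p (z' k) (vsum N (fun j => vscale (L k j) (z j)))).
  { intros k. exact (proj2_sig (constructive_indefinite_description _ (Hex k))). }
  clearbody L.
  exists (fun j => rsum M (fun k => mu k * L k j)). split; [|split].
  - intros j Hj. apply rsum_nonneg. intros k Hk. destruct (HL k Hk) as [Hl _].
    specialize (Hl j Hj). specialize (H1 k Hk). nra.
  - rewrite rsum_swap. rewrite <- H2. apply rsum_ext. intros k Hk.
    rewrite rsum_scal. destruct (HL k Hk) as [_ [-> _]]. ring.
  - intros m Hm. rewrite H3 by auto. rewrite !vsum_coord. unfold vscale.
    rewrite (rsum_ext M _ (fun k => rsum N (fun j => mu k * L k j * z j m))).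
    + rewrite rsum_swap. apply rsum_ext. intros j Hj. rewrite <- rsum_scalr. reflexivity.
    + intros k Hk. destruct (HL k Hk) as [_ [_ Hv]]. rewrite Hv by auto.
      rewrite vsum_coord. unfold vscale. rewrite <- rsum_scal. apply rsum_ext. intros; ring.
Qed.

Lemma step_eq N f w x t k :
  bms N f w x (S t) k = vscale (/ rsum N (fun j => f (vsub (bms N f w x t k) (bms N f w x t j)) * w j))
    (vsum N (fun j => vscale (f (vsub (bms N f w x t k) (bms N f w x t j)) * w j) (bms N f w x t j))).
Proof. reflexivity. Qed.

Lemma lam_ok p N (a : nat -> R) (z : nat -> vec) D :
  (forall j, (j < N)%nat -> 0 <= a j) -> rsum N a = D -> 0 < D ->
  (forall j, (j < N)%nat -> 0 <= a j / D) /\ rsum N (fun j => a j / D) = 1 /\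
  veq p (vscale (/ D) (vsum N (fun j => vscale (a j) (z j)))) (vsum N (fun j => vscale (a j / D) (z j))).
Proof. intros Ha HD HD0. split; [|split].
  - intros j Hj. unfold Rdiv. apply Rmult_le_pos; [auto| left; apply Rinv_0_lt_compat; lra].
  - unfold Rdiv. rewrite rsum_scalr, HD. field. lra.
  - intros m Hm. unfold vscale at 1. rewrite !vsum_coord. unfold vscale. rewrite <- rsum_scal.
    apply rsum_ext. intros; unfold Rdiv; ring. Qed.

Lemma unif p u v : vconv p u v -> forall e, 0 < e -> exists T, forall t, (T <= t)%nat -> close p (u t) v e.
Proof. induction p as [|p IH]; intros H e He.
  - exists 0%nat. intros t _ k Hk. lia.
  - destruct (IH (fun k Hk => H k ltac:(lia)) e He) as [T1 H1].
    destruct (H p ltac:(lia) e He) as [T2 H2].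
    exists (Nat.max T1 T2). intros t Ht k Hk.
    destruct (Nat.eq_dec k p) as [->|Hne].
    + apply H2. lia.
    + apply H1; lia. Qed.

Theorem lemma3 (p N : nat) (x : nat -> vec) (w : nat -> R) (f : vec -> R)
  (hw : forall j, (j < N)%nat -> 0 < w j)
  (hf : PDD p f)
  (i : nat) (hi : (i < N)%nat) (v : vec)
  (hv : is_vertex p (bms_C1 p N f w x) v)
  (hconv : vconv p (fun t => bms N f w x t i) v) :
  forall j, (j < N)%nat ->
    (exists vj : vec, vconv p (fun t => bms N f w x t j) vj /\ ~ veq p vj v) ->
    Un_cv (fun t => f (vsub (bms N f w x t i) (bms N f w x t j))) 0.
Proof.
  intros j hj [vj [hvj hne]].
  destruct hf as [hf01 [hf1 _]].
  set (X := bms N f w x).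
  assert (hff : forall y, f (vsub y y) = 1).
  { intros y. apply hf1. intros k _. unfold vsub, vzero. ring. }
  set (Dn := fun t k => rsum N (fun j => f (vsub (X t k) (X t j)) * w j)).
  assert (Hann : forall t k j, (j < N)%nat -> 0 <= f (vsub (X t k) (X t j)) * w j).
  { intros t k j' Hj'. specialize (hw j' Hj'). specialize (hf01 (vsub (X t k) (X t j'))). nra. }
  assert (HD0 : forall t k, (k < N)%nat -> 0 < Dn t k).
  { intros t k Hk. unfold Dn. eapply Rlt_le_trans; [| apply (rsum_ge_term _ _ k (Hann t k) Hk)].
    rewrite hff. specialize (hw k Hk). lra. }
  set (W := rsum N w).
  assert (HDW : forall t k, Dn t k <= W).
  { intros t k. apply rsum_le. intros j' Hj'. specialize (hw j' Hj'). specialize (hf01 (vsub (X t k) (X t j'))). nra. }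
  assert (Hlam : forall t k, (k < N)%nat ->
    (forall j, (j < N)%nat -> 0 <= f (vsub (X t k) (X t j)) * w j / Dn t k) /\
    rsum N (fun j => f (vsub (X t k) (X t j)) * w j / Dn t k) = 1 /\
    veq p (X (S t) k) (vsum N (fun j => vscale (f (vsub (X t k) (X t j)) * w j / Dn t k) (X t j)))).
  { intros t k Hk. unfold X; rewrite step_eq; fold X. apply lam_ok; auto. }
  assert (Hstep : forall t k, (k < N)%nat -> inD p N (X t) (X (S t) k) 1).
  { intros t k Hk. eexists. exact (Hlam t k Hk). }
  assert (Hmono : forall T t y s, (T <= t)%nat -> inD p N (X t) y s -> inD p N (X T) y s).
  { intros T t y s Hle. induction Hle; auto. intros Hd. apply IHHle.
    eapply inD_trans; [|exact Hd]. auto. }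
  assert (Hvj : forall T, inD p N (X T) vj 1).
  { intros T. apply D_closed. intros e He.
    destruct (unif _ _ _ hvj e He) as [T1 H1].
    exists (X (S (Nat.max T T1)) j), 1. split; [|split].
    - apply (Hmono T (Nat.max T T1)); [lia|]. auto.
    - rewrite Rminus_diag, Rabs_R0. lra.
    - apply H1. lia. }
  apply NNPP. intro Hn.
  assert (Hinf : exists eps, 0 < eps /\ forall T, exists t, (T <= t)%nat /\ eps <= f (vsub (X t i) (X t j))).
  { apply not_all_ex_not in Hn. destruct Hn as [eps Hn]. apply imply_to_and in Hn. destruct Hn as [He Hn].
    exists eps. split; auto. intros T. apply not_ex_all_not with (n := T) in Hn.
    apply not_all_ex_not in Hn. destruct Hn as [t Hn]. apply imply_to_and in Hn. destruct Hn as [Ht Hn].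
    exists t. split; [lia|]. unfold R_dist in Hn. rewrite Rminus_0_r in Hn.
    rewrite Rabs_right in Hn by (apply Rle_ge; apply hf01). fold X in Hn. lra. }
  destruct Hinf as [eps [He Hinf]].
  assert (Heps1 : eps <= 1).
  { destruct (Hinf 0%nat) as [t [_ Ht]]. specialize (hf01 (vsub (X t i) (X t j))). lra. }
  assert (HwW : w j <= W) by (apply rsum_ge_term; auto; intros; left; auto).
  assert (HW : 0 < W) by (specialize (hw j hj); lra).
  set (c := eps * w j / (2 * W)).
  assert (Hc0 : 0 < c).
  { unfold c. specialize (hw j hj). apply Rdiv_lt_0_compat; nra. }
  assert (Hc1 : c <= 1 / 2).
  { unfold c. apply Rmult_le_reg_r with (2 * W); [lra|]. unfold Rdiv.
    rewrite Rmult_assoc, Rinv_l by lra. specialize (hw j hj). nra. }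
  assert (Hcl : forall t, eps <= f (vsub (X t i) (X t j)) -> c <= f (vsub (X t i) (X t j)) * w j / Dn t i).
  { intros t Ht. specialize (HD0 t i hi). specialize (HDW t i). specialize (hw j hj).
    apply Rle_trans with (eps * w j / W).
    - unfold c. apply Rmult_le_compat_l; [nra|]. apply Rinv_le_contravar; lra.
    - unfold Rdiv. apply Rmult_le_compat; [nra| left; apply Rinv_0_lt_compat; lra | nra |].
      apply Rinv_le_contravar; lra. }
  assert (Hq : forall T, inD p N (X T) (vsub v (vscale c vj)) (1 - c)).
  { intros T. apply D_closed. intros e He'.
    destruct (unif _ _ _ hvj (e / 2) ltac:(lra)) as [T1 H1].
    destruct (unif _ _ _ hconv (e / 2) ltac:(lra)) as [T2 H2].
    destruct (Hinf (Nat.max T (Nat.max T1 T2))) as [t [Ht Hft]].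
    exists (vsub (X (S t) i) (vscale c (X t j))), (1 - c). split; [|split].
    - apply (Hmono T t); [lia|].
      destruct (Hlam t i hi) as [La [Lb Lc]].
      exact (inD_remove p N (X t) _ 1 _ j c La Lb Lc hj (Hcl t Hft)).
    - rewrite Rminus_diag, Rabs_R0. lra.
    - intros k Hk. specialize (H1 t ltac:(lia) k Hk). specialize (H2 (S t) ltac:(lia) k Hk).
      change (Rabs (X t j k - vj k) < e / 2) in H1. change (Rabs (X (S t) i k - v k) < e / 2) in H2. unfold vsub, vscale.
      replace (X (S t) i k - c * X t j k - (v k - c * vj k)) with ((X (S t) i k - v k) - c * (X t j k - vj k)) by ring.
      eapply Rle_lt_trans; [apply Rabs_triang|]. rewrite Rabs_Ropp, Rabs_mult, (Rabs_right c) by lra.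
      assert (c * Rabs (X t j k - vj k) <= 1/2 * (e/2)).
      { apply Rmult_le_compat; try lra; apply Rabs_pos. }
      lra. }
  set (b := vscale (/ (1 - c)) (vsub v (vscale c vj))).
  assert (Hbc : bms_C1 p N f w x b).
  { intros T. apply (inD_scale _ _ _ _ (1 - c)); [left; apply Rinv_0_lt_compat; lra | field; lra | apply Hq]. }
  destruct hv as [_ hvx].
  destruct (hvx vj b c Hvj Hbc ltac:(lra)) as [Hveq _].
  - intros k Hk. unfold b, vadd, vscale, vsub. field. lra.
  - exact (hne Hveq).
Qed.
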